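(* There is a polynomial $q$ such that for every $\mathsf{TL}[\Diamond^{-}]$ program $P$ with $L(P)\neq\emptyset$ there exists a string $w\in L(P)$ with $|w|\le q(|P|)$, where $|P|$ is the size of $P$.
   Context: $\mathsf{TL}[\Diamond^{-}]$ formulas over a finite alphabet $\Sigma$: $\phi ::= \sigma \mid \neg\phi \mid \phi_1\wedge\phi_2 \mid \Diamond^{-}\phi \mid \Box^{-}\phi$ with $\sigma\in\Sigma$. At position $i$ of $w$: $w,i\models\sigma$ iff $w_i=\sigma$; Boolean connectives as usual; $w,i\models\Diamond^{-}\phi$ iff $w,j\models\phi$ for some $j<i$; $w,i\models\Box^{-}\phi$ iff $w,j\models\phi$ for all $j\le i$. $w\models\phi$ iff $w,|w|\models\phi$, and $L(\phi)=\{w:w\models\phi\}$. A program is a straight-line (DAG) representation $(\phi_1,\dots,\phi_m)$ where $\phi_i$ may refer to earlier $\phi_j$, denoting $\phi_m$; its size is the total number of symbols, each reference to an earlier line counting as 1. *)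

(* Defs.v *)
From mathcomp Require Import all_boot all_algebra.
Set Implicit Arguments. Unset Strict Implicit. Unset Printing Implicit Defensive.

Inductive formula (Sigma : Type) :=
| FSym of Sigma
| FNot of formula Sigma
| FAnd of formula Sigma & formula Sigma
| FDia of formula Sigma      (* w,i |= <>^- phi  iff  w,j |= phi for some position j < i *)
| FBox of formula Sigma.     (* w,i |= []^- phi  iff  w,j |= phi for all positions j <= i *)

(* Positions of w are 1..|w|; w_i is the i-th letter (1-indexed);
   letter_at w i = None when i is not a position. *)
Definition letter_at (Sigma : Type) (w : seq Sigma) (i : nat) : option Sigma :=
  if 0 < i then nth None (map Some w) i.-1 else None.

Fixpoint sat (Sigma : eqType) (w : seq Sigma) (i : nat) (phi : formula Sigma) : bool :=
  match phi with
  | FSym s => letter_at w i == Some s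
  | FNot p => ~~ sat w i p
  | FAnd p q => sat w i p && sat w i q
  | FDia p => has (fun j => sat w j p) (iota 1 i.-1)
  | FBox p => all (fun j => sat w j p) (iota 1 i)
  end.

Definition models (Sigma : eqType) (w : seq Sigma) (phi : formula Sigma) : bool :=
  sat w (size w) phi.

Definition lang (Sigma : eqType) (phi : formula Sigma) : pred (seq Sigma) :=
  fun w => models w phi.

(* Program lines: formulas that may refer (PRef k) to an earlier line k
   (lines are numbered 0, 1, ..., m-1). *)
Inductive pline (Sigma : Type) :=
| PSym of Sigma
| PNot of pline Sigma
| PAnd of pline Sigma & pline Sigma
| PDia of pline Sigma
| PBox of pline Sigma
| PRef of nat.

Definition program (Sigma : Type) := seq (pline Sigma).

(* Expansion of a line given the expansions env of the previous lines;
   None if a reference does not point to an earlier line. *)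
Fixpoint resolve (Sigma : Type) (env : seq (formula Sigma)) (l : pline Sigma)
  : option (formula Sigma) :=
  match l with
  | PSym s => Some (FSym s)
  | PNot p => omap (@FNot Sigma) (resolve env p)
  | PAnd p q =>
      match resolve env p, resolve env q with
      | Some a, Some b => Some (FAnd a b)
      | _, _ => None
      end
  | PDia p => omap (@FDia Sigma) (resolve env p)
  | PBox p => omap (@FBox Sigma) (resolve env p)
  | PRef k => onth env k
  end.

Fixpoint expand_aux (Sigma : Type) (env : seq (formula Sigma)) (P : program Sigma)
  : option (seq (formula Sigma)) :=
  match P with
  | [::] => Some env
  | l :: P' =>
      match resolve env l with
      | Some f => expand_aux (rcons env f) P'
      | None => None
      end
  end.

(* The formula denoted by a program (phi_1, ..., phi_m): its last line phi_m.
   None if the program is empty or ill-formed (a forward/self reference). *)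
Definition program_formula (Sigma : Type) (P : program Sigma) : option (formula Sigma) :=
  match expand_aux [::] P with
  | Some (f :: fs) => Some (last f fs)
  | _ => None
  end.

Fixpoint pline_size (Sigma : Type) (l : pline Sigma) : nat :=
  match l with
  | PSym _ => 1
  | PNot p => (pline_size p).+1
  | PAnd p q => (pline_size p + pline_size q).+1
  | PDia p => (pline_size p).+1
  | PBox p => (pline_size p).+1
  | PRef _ => 1
  end.

Definition program_size (Sigma : Type) (P : program Sigma) : nat :=
  \sum_(l <- P) pline_size l.

Definition prog_lang (Sigma : eqType) (P : program Sigma) : pred (seq Sigma) :=
  fun w => if program_formula P is Some phi then models w phi else false.

(* Main.v *)
Require Import Defs.
From mathcomp Require Import all_boot all_algebra.
From Stdlib Require List.
From mathcomp Require Import zify.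
Set Implicit Arguments. Unset Strict Implicit.

Fixpoint subs (Sigma : Type) (g : formula Sigma) : seq (formula Sigma) :=
  g :: match g with
       | FSym _ => [::]
       | FNot p => @subs Sigma p
       | FAnd p q => @subs Sigma p ++ @subs Sigma q
       | FDia p => @subs Sigma p
       | FBox p => @subs Sigma p
       end.

Section Shrink.
Variable Sigma : eqType.
Variable w : seq Sigma.
Variable x0 : Sigma.
Variable E : seq (formula Sigma).

Let n := size w.
Definition fp (g : formula Sigma) (b : bool) :=
  (find (fun j => sat w j g == b) (iota 1 n)).+1.
Definition keep i := (i == n) || has (fun g => (i == fp g true) || (i == fp g false)) E.
Definition K := filter keep (iota 1 n).
Definition kp t := nth 0 K t.-1.
Definition w' := map (fun i => nth x0 w i.-1) K.

Lemma K_range i : i \in K -> 0 < i <= n.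
Proof. by rewrite mem_filter mem_iota add1n ltnS => /andP[_]. Qed.

Lemma K_sorted : sorted ltn K.
Proof. apply: sorted_filter; [exact: ltn_trans | exact: iota_ltn_sorted]. Qed.

Lemma K_uniq : uniq K.
Proof. by rewrite filter_uniq // iota_uniq. Qed.

Lemma kp_range t : 0 < t <= size K -> 0 < kp t <= n.
Proof.
case/andP=> t0 tK; apply: K_range; apply: mem_nth; by case: t t0 tK.
Qed.

Lemma kp_mono s t : 0 < s <= size K -> 0 < t <= size K -> (kp s < kp t) = (s < t).
Proof.
move=> /andP[s0 sK] /andP[t0 tK].
have hs : s.-1 \in [pred m | m < size K] by rewrite inE; case: s s0 sK.
have ht : t.-1 \in [pred m | m < size K] by rewrite inE; case: t t0 tK.
have H := sorted_ltn_nth ltn_trans 0 K_sorted.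
case: (ltngtP s t) => st.
- have e : s.-1 < t.-1 by move: s0 t0 st; clear; lia.
  exact: (H _ _ hs ht e).
- have e : t.-1 < s.-1 by move: s0 t0 st; clear; lia.
  apply/negbTE; rewrite -leqNgt ltnW //; exact: (H _ _ ht hs e).
- by rewrite st ltnn.
Qed.

Lemma kp_leq s t : 0 < s <= size K -> 0 < t <= size K -> (kp s <= kp t) = (s <= t).
Proof. by move=> hs ht; rewrite leqNgt [(s <= t)%N]leqNgt kp_mono. Qed.

Lemma in_K_kp p : p \in K -> exists s, 0 < s <= size K /\ kp s = p.
Proof.
move=> pK; exists (index p K).+1; split.
  by rewrite /= index_mem.
by rewrite /kp /= nth_index.
Qed.

Lemma inE_has g (a : pred (formula Sigma)) : List.In g E -> a g -> has a E.
Proof.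
elim: E => //= h E' IH [<-|/IH H] ag; [by rewrite ag | by rewrite H ?orbT].
Qed.

Lemma fp_spec g b j : 0 < j <= n -> (sat w j g == b) ->
  [/\ 0 < fp g b <= n, sat w (fp g b) g == b & fp g b <= j].
Proof.
case/andP=> j0 jn hj.
set a := (fun j => sat w j g == b).
have jlt : j.-1 < n by case: j j0 jn {hj}.
have fle : find a (iota 1 n) <= j.-1.
  rewrite leqNgt; apply/negP => /(before_find 0); rewrite /a nth_iota //.
  by rewrite add1n prednK // hj.
have fn : find a (iota 1 n) < n by apply: leq_ltn_trans fle jlt.
have hh : has a (iota 1 n) by rewrite has_find size_iota.
have := nth_find 0 hh; rewrite nth_iota // add1n => ha.
split => //.
by move: fle; rewrite -ltnS (prednK j0).
Qed.

Lemma keep_fp g b : List.In g E -> 0 < fp g b <= n -> fp g b \in K.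
Proof.
move=> gE hr; rewrite mem_filter mem_iota add1n ltnS hr andbT.
apply/orP; right.
apply: (@inE_has g (fun g0 => (fp g b == fp g0 true) || (fp g b == fp g0 false)) gE).
case: b {hr}; by rewrite eqxx ?orbT.
Qed.

Lemma size_w' : size w' = size K.
Proof. by rewrite size_map. Qed.

Lemma letter_corr t : 0 < t <= size K -> letter_at w' t = letter_at w (kp t).
Proof.
move=> ht; have /andP[k0 kn] := kp_range ht.
case/andP: ht => t0 tK.
rewrite /letter_at t0 k0.
have tK' : t.-1 < size K by move: t0 tK; clear; lia.
have kn' : (kp t).-1 < n by move: k0 kn; clear; lia.
rewrite (nth_map x0); last by rewrite size_w'.
rewrite (nth_map x0) //.
by rewrite (nth_map 0).
Qed.

Lemma corr g : (forall x, List.In x (subs g) -> List.In x E) ->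
  forall t, 0 < t <= size K -> sat w' t g = sat w (kp t) g.
Proof.
elim: g => [s|p IH|p IHp q IHq|p IH|p IH] hsub t ht /=.
- by rewrite letter_corr.
- rewrite IH // => x hx; apply: hsub; by right.
- rewrite IHp ?IHq // => x hx; apply: hsub; right; apply: List.in_or_app; tauto.
- have pE : List.In p E by apply: (hsub); right; case: p {IH hsub} => * /=; by left.
  have IH' : forall t, 0 < t <= size K -> sat w' t p = sat w (kp t) p.
    by apply: IH => x hx; apply: hsub; right.
  have /andP[k0 kn] := kp_range ht.
  case/andP: (ht) => t0 tK.
  apply/hasP/hasP => [[j]|[j]].
  + rewrite mem_iota add1n prednK // => /andP[j0 jt] hj.
    have hj' : 0 < j <= size K by rewrite j0 (ltnW (leq_trans jt tK)).
    exists (kp j); last by rewrite -IH'.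
    rewrite mem_iota add1n prednK // (kp_mono hj' ht) jt andbT.
    by case/andP: (kp_range hj').
  + rewrite mem_iota add1n prednK // => /andP[j0 jt] hj.
    have [fr fs fj] := fp_spec (j := j) (b := true) (g := p)
      (ltac:(by rewrite j0 (ltnW (leq_trans jt kn)))) (ltac:(by rewrite hj)).
    have [s [hs ks]] := in_K_kp (keep_fp pE fr).
    have st : s < t by rewrite -(kp_mono hs ht) ks (leq_ltn_trans fj jt).
    exists s; first by rewrite mem_iota add1n prednK // st andbT; case/andP: hs.
    by rewrite IH' // ks; move/eqP: fs.
- have pE : List.In p E by apply: (hsub); right; case: p {IH hsub} => * /=; by left.
  have IH' : forall t, 0 < t <= size K -> sat w' t p = sat w (kp t) p.
    by apply: IH => x hx; apply: hsub; right.
  have /andP[k0 kn] := kp_range ht.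
  case/andP: (ht) => t0 tK.
  apply/allP/allP => [H j|H j].
  + rewrite mem_iota add1n ltnS => /andP[j0 jt].
    apply/negPn/negP => hj.
    have [fr fs fj] := fp_spec (j := j) (b := false) (g := p)
      (ltac:(by rewrite j0 (leq_trans jt kn))) (ltac:(by rewrite (negbTE hj))).
    have [s [hs ks]] := in_K_kp (keep_fp pE fr).
    have st : s <= t by rewrite -(kp_leq hs ht) ks (leq_trans fj jt).
    have := H s; rewrite mem_iota add1n ltnS st (IH' _ hs) ks (eqP fs).
    by case/andP: hs => -> _ /(_ isT).
  + rewrite mem_iota add1n ltnS => /andP[j0 jt].
    have hj' : 0 < j <= size K by rewrite j0 (leq_trans jt tK).
    rewrite IH' //; apply: H; rewrite mem_iota add1n ltnS (kp_leq hj' ht) jt andbT.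
    by case/andP: (kp_range hj').
Qed.


Lemma foldr_mem i (E0 : seq (formula Sigma)) :
  has (fun g => (i == fp g true) || (i == fp g false)) E0 ->
  i \in foldr (fun g acc => fp g true :: fp g false :: acc) [::] E0.
Proof.
elim: E0 => //= g E0 IH /orP[/orP[/eqP->|/eqP->]|/IH H].
- by rewrite inE eqxx.
- by rewrite !inE eqxx orbT.
- by rewrite !inE H !orbT.
Qed.

Lemma foldr_size (E0 : seq (formula Sigma)) :
  size (foldr (fun g acc => fp g true :: fp g false :: acc) [::] E0) = (size E0).*2.
Proof. by elim: E0 => //= g E0 ->; rewrite doubleS. Qed.

Lemma K_size : size K <= (size E).*2.+1.
Proof.
rewrite -(foldr_size E).
have -> : (size (foldr (fun g acc => fp g true :: fp g false :: acc) [::] E)).+1 =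
  size (n :: foldr (fun g acc => fp g true :: fp g false :: acc) [::] E) by [].
apply: uniq_leq_size; first exact: K_uniq.
move=> i; rewrite mem_filter => /andP[/orP[/eqP->|/foldr_mem H] _].
  by rewrite inE eqxx.
by rewrite inE H orbT.
Qed.

Lemma kp_last : 0 < n -> 0 < size K /\ kp (size K) = n.
Proof.
move=> n0.
have nK : n \in K by rewrite mem_filter /keep eqxx mem_iota add1n ltnS n0 leqnn.
have [s [hs ks]] := in_K_kp nK.
have K0 : 0 < size K by case/andP: hs => s0 sK; apply: leq_trans sK.
have hK : 0 < size K <= size K by rewrite K0 leqnn.
split => //.
case/andP: (hs) => s0 sK.
move: sK; rewrite leq_eqVlt => /orP[/eqP<-//|sK].
have := kp_mono hs hK; rewrite sK ks => H.
have /andP[_ kn] := kp_range hK.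
by move: H; rewrite ltnNge kn.
Qed.

End Shrink.

Lemma shrink (Sigma : eqType) (w : seq Sigma) E phi :
  (forall x, List.In x (subs phi) -> List.In x E) -> models w phi ->
  exists w2 : seq Sigma, models w2 phi /\ size w2 <= (size E).*2.+1.
Proof.
case: w => [|x0 w0] hsub hm; first by exists [::].
set w := x0 :: w0.
exists (w' w x0 E); split; last by rewrite size_w' K_size.
have [K0 kl] := @kp_last _ w E isT.
rewrite /models size_w' corr //; first by rewrite kl.
by rewrite K0 leqnn.
Qed.

Definition closedE (Sigma : Type) (env E : seq (formula Sigma)) :=
  forall f, List.In f env -> forall x, List.In x (subs f) -> List.In x E.

Lemma onth_In (T : Type) (s : seq T) k x : onth s k = Some x -> List.In x s.
Proof.
elim: s k => [|y s IH] [|k] //=; first by case=> ->; left.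
by move=> /IH; right.
Qed.

Lemma resolve_sub (Sigma : Type) env (l : pline Sigma) f E :
  resolve env l = Some f -> closedE env E ->
  exists s, size s <= pline_size l /\ forall x, List.In x (subs f) -> List.In x (s ++ E).
Proof.
move=> + hc; elim: l f => [a|p IH|p IHp q IHq|p IH|p IH|k] f /=.
- case=> <-; exists [:: FSym a]; split => // x /= [<-|[]]; by left.
- case e: (resolve env p) => [a|] //= [<-].
  have [s [hs hx]] := IH a e.
  exists (FNot a :: s); split => //= x [<-|/hx]; [by left | by right].
- case e1: (resolve env p) => [a|] //; case e2: (resolve env q) => [b|] // [<-].
  have [s1 [hs1 hx1]] := IHp a e1; have [s2 [hs2 hx2]] := IHq b e2.
  exists (FAnd a b :: s1 ++ s2); split; first by rewrite /= size_cat ltnS leq_add.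
  move=> x /= [<-|/List.in_app_iff [/hx1|/hx2]]; first by left.
  + rewrite !List.in_app_iff; tauto.
  + rewrite !List.in_app_iff; tauto.
- case e: (resolve env p) => [a|] //= [<-].
  have [s [hs hx]] := IH a e.
  exists (FDia a :: s); split => //= x [<-|/hx]; [by left | by right].
- case e: (resolve env p) => [a|] //= [<-].
  have [s [hs hx]] := IH a e.
  exists (FBox a :: s); split => //= x [<-|/hx]; [by left | by right].
- move=> e; have hf := onth_In e; exists [::]; split => // x; exact: hc.
Qed.

Lemma expand_sub (Sigma : Type) (P : program Sigma) env env' E :
  expand_aux env P = Some env' -> closedE env E ->
  exists E', size E' <= size E + program_size P /\ closedE env' E'.
Proof.
elim: P env E => [|l P IH] env E /=.
  by case=> <- hc; exists E; rewrite /program_size big_nil addn0.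
case e: (resolve env l) => [f|] // he hc.
have [s [hs hx]] := resolve_sub e hc.
have hc' : closedE (rcons env f) (s ++ E).
  move=> g; rewrite -cats1 List.in_app_iff => [[hg|[<-|[]]]] x hxs.
  + by apply/List.in_app_iff; right; exact: hc hg x hxs.
  + exact: hx.
have [E' [hE' hcE']] := IH _ _ he hc'.
exists E'; split => //.
rewrite /program_size big_cons; apply: leq_trans hE' _.
rewrite size_cat; move: hs; rewrite /program_size; clear; lia.
Qed.

Lemma In_last (T : Type) (f : T) fs : List.In (last f fs) (f :: fs).
Proof. elim: fs f => [|g fs IH] f /=; [by left | by right; apply: IH]. Qed.

Local Open Scope ring_scope.

Theorem lemma4p5 (Sigma : finType) :
  exists q : {poly nat},
    forall P : program Sigma,
      (exists w : seq Sigma, prog_lang P w) ->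
      exists w : seq Sigma, prog_lang P w /\ (size w <= q.[program_size P])%N.
Proof.
exists ('X + 'X + 1) => P [w hw].
move: hw; rewrite /prog_lang /program_formula.
case e: (expand_aux [::] P) => [[|f fs]|] //= hm.
have [E [hE hc]] := expand_sub e (E := [::]) (fun f0 (h : List.In f0 [::]) => match h with end).
have hsub := hc _ (In_last f fs).
have [w2 [hm2 hs2]] := shrink hsub hm.
exists w2; split => //.
rewrite !hornerE /=.
apply: (leq_trans hs2).
move: hE; clear; rewrite /= -addnn; lia.
Qed.
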